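(* Let $n\ge1$ and let $\alpha=(\alpha_1,\dots,\alpha_k)$ be a composition of $n$ (positive integers summing to $n$), and work over the alphabet $A=\{a_1<a_2<\dots<a_k\}$. Then $$|\{w\in\mathcal{W}^o_n:\operatorname{wt}(w)=x_1^{\alpha_1}\cdots x_k^{\alpha_k}\}|=|\{w\in\mathcal{W}^e_n:\operatorname{wt}(w)=x_1^{\alpha_1}\cdots x_k^{\alpha_k}\}|.$$
   Context: Words are finite sequences of letters from the totally ordered alphabet $A=\{a_1<\dots<a_k\}$; $\mathcal{W}_n$ is the set of words of length $n$. Words are compared in lexicographic order (a proper prefix is smaller than the word). Two words $u,v$ are conjugate if $u=rs$ and $v=sr$ for some words $r,s$. A nonempty word is primitive if it is not of the form $r^j$ with $j\ge2$. A Lyndon word is a primitive word strictly smaller than all its other conjugates (equivalently, a nonempty word strictly smaller than each of its proper nonempty suffixes). Every word $w$ has a unique Lyndon factorization $w=\ell_1\ell_2\cdots\ell_m$ with each $\ell_i$ a Lyndon word and $\ell_1\ge\ell_2\ge\dots\ge\ell_m$; the $\ell_i$ are the Lyndon factors of $w$. The weight of a word is $\operatorname{wt}(w)=x_1^{\beta_1}\cdots x_k^{\beta_k}$ where $\beta_i$ is the number of occurrences of $a_i$ in $w$. $\mathcal{W}^o_n$ is the set of words in $\mathcal{W}_n$ all of whose Lyndon factors have odd length and are pairwise distinct. $\mathcal{W}^e_n$ is the set of words in $\mathcal{W}_n$ all of whose Lyndon factors have even length, except possibly for one factor of length one. *)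

(* Defs.v *)
From mathcomp Require Import all_boot.
From mathcomp Require Import boolp.
Set Implicit Arguments. Unset Strict Implicit. Unset Printing Implicit Defensive.

(* Words over the alphabet A = {a_1 < ... < a_k}, encoded as 'I_k
   (letter a_{i+1} is the ordinal i), ordered by the natural order. *)
Definition word (k : nat) := seq 'I_k.

Fixpoint lexlt_nat (s t : seq nat) : bool :=
  match s, t with
  | [::], [::] => false
  | [::], _ :: _ => true
  | _ :: _, [::] => false
  | x :: s', y :: t' => (x < y) || ((x == y) && lexlt_nat s' t')
  end.

Definition lexlt k (u v : word k) : bool := lexlt_nat (map val u) (map val v).
Definition lexle k (u v : word k) : bool := (u == v) || lexlt u v.

Definition lyndon k (w : word k) : bool :=
  (w != [::]) && all (fun i => lexlt w (drop i w)) (iota 1 (size w).-1).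

Definition lyndon_factorization k (w : word k) (ls : seq (word k)) : Prop :=
  [/\ flatten ls = w, all (@lyndon k) ls & sorted (fun a b => lexle b a) ls].

Definition in_Wo k (w : word k) : Prop :=
  exists ls, lyndon_factorization w ls /\
    all (fun l => odd (size l)) ls /\ uniq ls.

Definition in_We k (w : word k) : Prop :=
  exists ls, lyndon_factorization w ls /\
    (count (fun l => odd (size l)) ls <= 1)%N /\
    all (fun l => odd (size l) ==> (size l == 1%N)) ls.

Definition has_weight k (alpha : seq nat) (w : word k) : Prop :=
  forall i : 'I_k, count_mem i w = nth 0%N alpha i.

(* Main.v *)
Require Import Defs.
From mathcomp Require Import all_boot.
From mathcomp Require Import boolp.
From mathcomp Require Import all_algebra mpoly.
Set Implicit Arguments. Unset Strict Implicit. Unset Printing Implicit Defensive.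

Lemma nlt_irr s : lexlt_nat s s = false.
Proof. by elim: s => //= x s ->; rewrite ltnn eqxx. Qed.

Lemma nlt_trans s t u : lexlt_nat s t -> lexlt_nat t u -> lexlt_nat s u.
Proof.
elim: s t u => [|x s IH] [|y t] [|z u] //=.
case/orP=> [xy|/andP[/eqP-> st]]; case/orP=> [yz|/andP[/eqP<- tu]].
- by rewrite (ltn_trans xy yz).
- by rewrite xy.
- by rewrite yz.
- by rewrite (IH _ _ st tu) eqxx orbT.
Qed.

Lemma nlt_total s t : s != t -> lexlt_nat s t || lexlt_nat t s.
Proof.
elim: s t => [|x s IH] [|y t] //=.
move=> H; case: (ltngtP x y) => [xy|xy|exy] //=.
subst y; apply: IH; apply: contra H => /eqP ->; done.
Qed.

Lemma nlt_catl u s t : lexlt_nat (u ++ s) (u ++ t) = lexlt_nat s t.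
Proof. by elim: u => //= x u ->; rewrite ltnn eqxx. Qed.

Lemma nlt_prefix s t : t != [::] -> lexlt_nat s (s ++ t).
Proof. by elim: s => [|x s IH] /=; [case: t | move=> /IH ->; rewrite eqxx orbT]. Qed.

Lemma nlt_ext s t x y : lexlt_nat s t -> size t <= size s ->
  lexlt_nat (s ++ x) (t ++ y).
Proof.
elim: s t => [|a s IH] [|b t] //=.
case/orP=> [->//|/andP[/eqP-> st] le]; by rewrite eqxx (IH _ st le) orbT.
Qed.

Lemma nlt_cases s t : lexlt_nat s t ->
  (exists r, t = s ++ r) \/ (forall x y, lexlt_nat (s ++ x) (t ++ y)).
Proof.
elim: s t => [|a s IH] [|b t] //=.
- by move=> _; left; exists (b :: t).
case/orP=> [ab|/andP[/eqP-> st]].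
  by right=> x y; rewrite ab.
case: (IH _ st) => [[r ->]|H]; first by left; exists r.
by right=> x y; rewrite eqxx H orbT.
Qed.

Section Lex.
Variable k : nat.
Implicit Types u v w : word k.

Lemma mapval_inj : injective (map (@nat_of_ord k)).
Proof. exact: inj_map val_inj. Qed.

Lemma lt_irr u : lexlt u u = false.
Proof. exact: nlt_irr. Qed.

Lemma lt_trans u v w : lexlt u v -> lexlt v w -> lexlt u w.
Proof. exact: nlt_trans. Qed.

Lemma lt_total u v : u != v -> lexlt u v || lexlt v u.
Proof. by move=> H; apply: nlt_total; apply: contra H => /eqP/mapval_inj ->. Qed.

Lemma lt_catl u v w : lexlt (u ++ v) (u ++ w) = lexlt v w.
Proof. by rewrite /lexlt !map_cat nlt_catl. Qed.

Lemma lt_prefix u v : v != [::] -> lexlt u (u ++ v).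
Proof. by move=> H; rewrite /lexlt map_cat nlt_prefix //; case: v H. Qed.

Lemma le_prefix u v : lexle u (u ++ v).
Proof.
rewrite /lexle; case: v => [|a v]; first by rewrite cats0 eqxx.
by rewrite lt_prefix ?orbT.
Qed.

Lemma lt_ext u v x y : lexlt u v -> size v <= size u -> lexlt (u ++ x) (v ++ y).
Proof. by rewrite /lexlt !map_cat => H le; apply: nlt_ext; rewrite ?size_map. Qed.

Lemma lt_cases u v : lexlt u v ->
  (exists r, v = u ++ r) \/ (forall x y, lexlt (u ++ x) (v ++ y)).
Proof.
rewrite /lexlt => /nlt_cases [[r Hr]|H].
  left; exists (drop (size u) v).
  have := congr1 (take (size u)) Hr; rewrite take_size_cat ?size_map // -map_take.
  move=> /mapval_inj E; by rewrite -{1}(cat_take_drop (size u) v) E.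
by right=> x y; rewrite !map_cat.
Qed.

Lemma le_refl u : lexle u u.
Proof. by rewrite /lexle eqxx. Qed.

Lemma le_trans u v w : lexle u v -> lexle v w -> lexle u w.
Proof.
rewrite /lexle => /orP[/eqP->//|uv] /orP[/eqP<-|vw]; first by rewrite uv orbT.
by rewrite (lt_trans uv vw) orbT.
Qed.

Lemma lt_le_trans u v w : lexlt u v -> lexle v w -> lexlt u w.
Proof. by move=> uv /orP[/eqP<-//|vw]; apply: lt_trans vw. Qed.

Lemma le_lt_trans u v w : lexle u v -> lexlt v w -> lexlt u w.
Proof. by move=> /orP[/eqP->//|uv] vw; apply: lt_trans vw. Qed.

Lemma le_antisym u v : lexle u v -> lexle v u -> u = v.
Proof.
rewrite /lexle => /orP[/eqP->//|uv] /orP[/eqP->//|vu].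
by have := lt_trans uv vu; rewrite lt_irr.
Qed.

Lemma le_total u v : lexle u v || lexle v u.
Proof.
rewrite /lexle; case: (eqVneq u v) => [->|/lt_total]; first by [];
by case/orP=> ->; rewrite ?orbT.
Qed.

Lemma nlt_le u v : ~~ lexlt u v -> lexle v u.
Proof.
rewrite /lexle => H; case: (eqVneq v u) => //= vu.
by move: (lt_total vu); rewrite (negbTE H) orbF.
Qed.

End Lex.

Lemma cat_eq_cases (T : Type) (a b c d : seq T) : a ++ b = c ++ d ->
  (exists x, c = a ++ x /\ b = x ++ d) \/ (exists x, a = c ++ x /\ d = x ++ b).
Proof.
elim: a c => [|y a IH] [|z c] /=.
- by move=> ->; left; exists [::].
- by move=> ->; left; exists (z :: c).
- by move=> <-; right; exists (y :: a).
case=> <- /IH [[x [-> ->]]|[x [-> ->]]]; [left|right]; by exists x.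
Qed.

Section Lyndon.
Variable k : nat.
Implicit Types u v w l p q : word k.

Definition ge (a b : word k) := lexle b a.

Lemma ge_trans : transitive ge.
Proof. by move=> a b c ba cb; apply: le_trans cb ba. Qed.

Lemma lyndonP w : reflect (w != [::] /\ forall i, 0 < i < size w -> lexlt w (drop i w))
  (lyndon w).
Proof.
apply: (iffP andP) => [[H /allP A]|[H A]]; split => //.
  move=> i /andP[i0 iw]; apply: A; rewrite mem_iota i0 /=.
  by case: (size w) iw => //= m; rewrite ?add1n.
apply/allP=> i; rewrite mem_iota => /andP[i0 iw]; apply: A; rewrite i0 /=.
by case: (size w) iw => [|m] /=; rewrite ?add1n // ltnS leqn0 => /eqP i00; rewrite i00 in i0.
Qed.

Lemma lyn_nil w : lyndon w -> w != [::].
Proof. by case/andP. Qed.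

Lemma lyn_suffix w p s : lyndon w -> w = p ++ s -> p != [::] -> s != [::] ->
  lexlt w s.
Proof.
move=> /lyndonP [_ A] E pn sn.
have -> : s = drop (size p) w by rewrite E drop_size_cat.
apply: A; rewrite lt0n size_eq0 pn /= E size_cat -{1}(addn0 (size p)) ltn_add2l.
by rewrite lt0n size_eq0.
Qed.

Lemma lyn_letter (a : 'I_k) : lyndon [:: a].
Proof. by []. Qed.

Lemma uv_lt_v u v : lyndon u -> lyndon v -> lexlt u v -> lexlt (u ++ v) v.
Proof.
move=> Lu Lv uv; case: (lt_cases uv) => [[r Er]|H].
  have rn : r != [::].
    by apply: contraTneq uv => r0; rewrite Er r0 cats0 lt_irr.
  rewrite {2}Er lt_catl; apply: (lyn_suffix Lv Er) => //; exact: lyn_nil.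
by have := H v [::]; rewrite cats0.
Qed.

Lemma lyn_cat u v : lyndon u -> lyndon v -> lexlt u v -> lyndon (u ++ v).
Proof.
move=> Lu Lv uv; apply/lyndonP; split.
  by case: u Lu {uv} => //; rewrite /lyndon.
move=> i /andP[i0 ilt]; rewrite drop_cat.
case: ltnP => iu.
  apply: lt_ext; last by rewrite size_drop leq_subr.
  by case/lyndonP: Lu => _; apply; rewrite i0.
have uvv := uv_lt_v Lu Lv uv.
case: (eqVneq i (size u)) => [->|ne]; first by rewrite subnn drop0.
apply: (lt_trans uvv); case/lyndonP: Lv => _; apply.
rewrite subn_gt0 ltn_neqAle eq_sym ne iu /=.
by rewrite ltn_subLR // -size_cat.
Qed.

Fixpoint ins l (ls : seq (word k)) : seq (word k) :=
  match ls with
  | [::] => [:: l]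
  | h :: t => if lexlt l h then ins (l ++ h) t else l :: h :: t
  end.

Definition fact (w : word k) : seq (word k) := foldr (fun a ls => ins [:: a] ls) [::] w.

Lemma ins_ok l ls : lyndon l -> all (@lyndon k) ls -> sorted ge ls ->
  [/\ all (@lyndon k) (ins l ls), sorted ge (ins l ls) &
      flatten (ins l ls) = l ++ flatten ls].
Proof.
elim: ls l => [|h t IH] l Ll /= Als S; first by rewrite Ll cats0.
case/andP: Als => Lh Lt.
case: ifP => lh.
  have [A1 A2 A3] := IH (l ++ h) (lyn_cat Ll Lh lh) Lt (path_sorted S).
  by split => //; rewrite A3 catA.
split => //=; first by rewrite Ll Lh.
by rewrite /ge nlt_le ?lh.
Qed.

Lemma fact_ok w : lyndon_factorization w (fact w).
Proof.
rewrite /lyndon_factorization; elim: w => [|a w [IH1 IH2 IH3]] //=.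
have [A1 A2 A3] := ins_ok (lyn_letter a) IH2 IH3.
by split => //; rewrite A3 IH1.
Qed.

Lemma pref_bound l rest q r : all (fun x => lexle x l) rest ->
  q ++ r = flatten rest -> q != [::] ->
  exists z v, [/\ q = z ++ v, v != [::] & lexle v l].
Proof.
elim: rest q => [|l2 rest IH] q /=.
  by move=> _ /eqP; rewrite -size_eq0 size_cat addn_eq0 size_eq0 => /andP[/eqP->].
case/andP=> l2l All E qn.
case: (cat_eq_cases E) => [[x [El2 Er]]|[x [Eq Ef]]].
  exists [::], q; split => //; apply: le_trans l2l; rewrite El2; exact: le_prefix.
case: (eqVneq x [::]) => [x0|xn].
  exists [::], q; split => //; apply: le_trans l2l.
  by rewrite Eq x0 cats0 le_refl.
have [z [v [Ex vn vl]]] := IH x All (esym Ef) xn.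
by exists (l2 ++ z), v; rewrite Eq Ex catA.
Qed.

Lemma lyn_prefix_bound l rest p s : sorted ge (l :: rest) ->
  all (@lyndon k) (l :: rest) -> lyndon p -> p ++ s = l ++ flatten rest ->
  size p <= size l.
Proof.
move=> S /andP[Ll _] Lp E; rewrite leqNgt; apply/negP => lt.
case: (cat_eq_cases E) => [[x [Ex _]]|[x [Ep Ef]]].
  by move: lt; rewrite Ex size_cat ltnNge leq_addr.
have xn : x != [::].
  by apply: contraTneq lt => x0; rewrite Ep x0 cats0 ltnn.
have All : all (fun y => lexle y l) rest.
  have := order_path_min ge_trans S.
  by apply: sub_all.
have [z [v [Ex vn vl]]] := pref_bound All (esym Ef) xn.
have pv : lexlt p v.
  apply: (lyn_suffix Lp (p := l ++ z)) => //; first by rewrite Ep Ex catA.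
  by rewrite -size_eq0 size_cat addn_eq0 size_eq0 (negbTE (lyn_nil Ll)).
have lp : lexle l p by rewrite Ep; exact: le_prefix.
by have := lt_le_trans (lt_le_trans pv vl) lp; rewrite lt_irr.
Qed.

End Lyndon.

Section Unique.
Variable k : nat.
Implicit Types u v w l p q : word k.

Lemma flatten_lyn_nil (ls : seq (word k)) : all (@lyndon k) ls -> flatten ls = [::] -> ls = [::].
Proof.
case: ls => //= l ls /andP[Ll _] /eqP; rewrite -size_eq0 size_cat addn_eq0 size_eq0.
by rewrite (negbTE (lyn_nil Ll)).
Qed.

Lemma fact_uniq (ls1 ls2 : seq (word k)) : all (@lyndon k) ls1 -> sorted (@ge k) ls1 ->
  all (@lyndon k) ls2 -> sorted (@ge k) ls2 -> flatten ls1 = flatten ls2 -> ls1 = ls2.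
Proof.
elim: ls1 ls2 => [|l1 r1 IH] [|l2 r2] //.
- by move=> _ _ A2 _ /esym /(flatten_lyn_nil A2).
- by move=> A1 _ _ _ /(flatten_lyn_nil A1).
move=> A1 S1 A2 S2 /= E.
have L1 : lyndon l1 by case/andP: A1.
have L2 : lyndon l2 by case/andP: A2.
have b1 := lyn_prefix_bound S1 A1 L2 (esym E).
have b2 := lyn_prefix_bound S2 A2 L1 E.
have El : l1 = l2.
  have := congr1 (take (size l1)) E; rewrite take_size_cat // takel_cat //.
  have -> : size l1 = size l2 by apply/eqP; rewrite eqn_leq b1 b2.
  by rewrite take_size.
subst l2; congr (_ :: _); apply: IH.
- by case/andP: A1.
- exact: path_sorted S1.
- by case/andP: A2.
- exact: path_sorted S2.
by have := congr1 (drop (size l1)) E; rewrite !drop_size_cat.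
Qed.

Lemma fact_unique w ls : lyndon_factorization w ls -> ls = fact w.
Proof.
case=> F A S; have [F' A' S'] := fact_ok w.
by apply: fact_uniq => //; rewrite F F'.
Qed.

Lemma ge_total : total (@ge k).
Proof. by move=> a b; rewrite /ge orbC le_total. Qed.

Lemma ge_antisym : antisymmetric (@ge k).
Proof. by move=> a b /andP[ab ba]; apply: le_antisym. Qed.

Lemma sort_fact (ms : seq (word k)) : all (@lyndon k) ms ->
  lyndon_factorization (flatten (sort (@ge k) ms)) (sort (@ge k) ms).
Proof.
move=> A; split => //; first by rewrite (perm_all _ (permEl (perm_sort _ _))).
exact (sort_sorted ge_total ms).
Qed.

Lemma fact_sort (ms : seq (word k)) : all (@lyndon k) ms ->
  fact (flatten (sort (@ge k) ms)) = sort (@ge k) ms.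
Proof. by move=> A; rewrite -(fact_unique (sort_fact A)). Qed.

Lemma fact_perm_eq w1 w2 : perm_eq (fact w1) (fact w2) -> w1 = w2.
Proof.
move=> P; have [F1 _ S1] := fact_ok w1; have [F2 _ S2] := fact_ok w2.
have : sort (@ge k) (fact w1) = sort (@ge k) (fact w2).
  by apply/perm_sortP => //; [exact: ge_total|exact: ge_trans|exact: ge_antisym].
by rewrite !sorted_sort //; [move=> E; rewrite -F1 -F2 E|exact: ge_trans|exact: ge_trans].
Qed.

End Unique.

Section Count.
Variable k : nat.
Implicit Types u v w l p q : word k.

Definition wt w : 'X_{1..k} := [multinom count_mem a w | a < k].

Lemma wtE w a : wt w a = count_mem a w.
Proof. by rewrite mnmE. Qed.

Lemma wt_cat u v : wt (u ++ v) = (wt u + wt v)%MM.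
Proof. by apply/mnmP => a; rewrite mnmDE !wtE count_cat. Qed.

Lemma wt_nil : wt [::] = 0%MM.
Proof. by apply/mnmP => a; rewrite wtE. Qed.

Lemma wt_flatten (ls : seq (word k)) :
  wt (flatten ls) = \big[+%MM/0%MM]_(l <- ls) wt l.
Proof. by elim: ls => [|l ls IH]; rewrite ?big_nil ?wt_nil // big_cons /= wt_cat IH. Qed.

Lemma wt_flatten_perm (ls1 ls2 : seq (word k)) : perm_eq ls1 ls2 ->
  wt (flatten ls1) = wt (flatten ls2).
Proof. by move=> P; rewrite !wt_flatten (perm_big _ P). Qed.

Lemma mdeg_wt w : mdeg (wt w) = size w.
Proof.
elim: w => [|a w IH]; first by rewrite wt_nil mdeg0.
rewrite -cat1s wt_cat mdegD IH /= -add1n; congr addn.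
rewrite mdegE (bigD1 a) //= big1 ?wtE /= ?eqxx // => i ia.
by rewrite wtE /= eq_sym (negbTE ia).
Qed.

Lemma count_bij (X : finType) (SA : pred X) (phi : seq (word k) -> X)
  (R : X -> seq (word k)) (Q : pred (seq (word k))) (beta : 'X_{1..k}) (d : nat) :
  mdeg beta = d ->
  (forall ls1 ls2, perm_eq ls1 ls2 -> phi ls1 = phi ls2) ->
  (forall ls1 ls2, perm_eq ls1 ls2 -> Q ls1 = Q ls2) ->
  (forall x, SA x -> [/\ phi (R x) = x, all (@lyndon k) (R x), Q (R x) &
                         wt (flatten (R x)) = beta]) ->
  (forall ls, all (@lyndon k) ls -> sorted (@ge k) ls -> Q ls ->
      wt (flatten ls) = beta -> SA (phi ls) /\ perm_eq ls (R (phi ls))) ->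
  #|SA| = #|[set t : d.-tuple 'I_k |
             `[< exists ls, [/\ lyndon_factorization (val t) ls, Q ls &
                               wt (val t) = beta] >]]|.
Proof.
move=> dbeta Hphi HQ H2 H3.
set RHS := [set t : d.-tuple 'I_k | _].
pose psi (t : d.-tuple 'I_k) := phi (fact (val t)).
have inR t : t \in RHS -> [/\ Q (fact t), wt t = beta & SA (psi t) /\
      perm_eq (fact t) (R (psi t))].
  rewrite inE => /asboolP [ls [F Qls wtb]].
  have E := fact_unique F; subst ls; case: F => F A S.
  by split => //; apply: H3 => //; rewrite F.
have inj : {in RHS &, injective psi}.
  move=> t1 t2 /inR [_ _ [_ P1]] /inR [_ _ [_ P2]] E.
  apply: val_inj; apply: fact_perm_eq.
  by rewrite (perm_trans P1) // /psi -/(psi t1) E perm_sym.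
rewrite -(card_in_imset inj); apply: eq_card => x.
apply/idP/imsetP.
  2: by case=> t /inR [_ _ [S _]] ->.
move=> Sx; have [E1 A1 Q1 W1] := H2 x Sx.
set w := flatten (sort (@ge k) (R x)).
have P := permEl (perm_sort (@ge k) (R x)).
have ww : wt w = beta by rewrite /w (wt_flatten_perm P).
have sw : size w == d by rewrite -mdeg_wt ww dbeta.
exists (Tuple sw).
  rewrite inE; apply/asboolP; exists (sort (@ge k) (R x)); split => //.
    exact: sort_fact.
  by rewrite (HQ _ _ P).
by rewrite /psi /= fact_sort // (Hphi _ _ P) E1.
Qed.

End Count.

Lemma perm_countP (T : eqType) (s1 s2 : seq T) :
  (forall x, count_mem x s1 = count_mem x s2) -> perm_eq s1 s2.
Proof. by move=> H; apply/allP => x _; apply/eqP; apply: H. Qed.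

Lemma uniq_count1 (T : eqType) (s : seq T) :
  (forall x, count_mem x s <= 1) -> uniq s.
Proof.
move=> H; apply: count_mem_uniq => x; have := H x.
case: (boolP (x \in s)) => xs.
  by have := xs; rewrite -has_pred1 has_count; case: (count_mem x s) => [|[]].
by move=> _; apply/eqP; rewrite -/(nat_of_bool false) eqn0Ngt -has_count has_pred1.
Qed.

Section Multi.
Variables k n : nat.

Definition lynL : seq (word k) :=
  undup (flatten [seq [seq val t | t <- enum {: j.-tuple 'I_k} & lyndon (val t)]
                 | j <- iota 1 n]).

Lemma mem_lynL l : (l \in lynL) = lyndon l && (size l <= n).
Proof.
rewrite mem_undup; apply/flatten_mapP/andP.
  case=> j; rewrite mem_iota => /andP[j1 jn] /mapP [t]; rewrite mem_filter => /andP[Lt _] ->.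
  by split => //; rewrite size_tuple -ltnS -(add1n n).
case=> Ll ln; exists (size l).
  rewrite mem_iota add1n ltnS ln andbT lt0n size_eq0; exact: lyn_nil.
apply/mapP; exists (Tuple (eqxx (size l))) => //.
by rewrite mem_filter /= Ll mem_enum.
Qed.

Lemma lynL_uniq : uniq lynL.
Proof. exact: undup_uniq. Qed.

Definition m := size lynL.
Definition Lf (i : 'I_m) : word k := nth [::] lynL i.

Lemma Lf_mem i : Lf i \in lynL.
Proof. exact: mem_nth. Qed.

Lemma Lf_lyn i : lyndon (Lf i).
Proof. by have := Lf_mem i; rewrite mem_lynL => /andP[]. Qed.

Lemma Lf_size i : size (Lf i) <= n.
Proof. by have := Lf_mem i; rewrite mem_lynL => /andP[]. Qed.

Lemma Lf_inj : injective Lf.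
Proof.
move=> i j /eqP; rewrite /Lf nth_uniq ?lynL_uniq //; first by move/eqP/val_inj.
Qed.

Lemma Lf_onto l : l \in lynL -> exists i, Lf i = l.
Proof.
move=> ll; have H : index l lynL < m by rewrite index_mem.
by exists (Ordinal H); rewrite /Lf nth_index.
Qed.

Definition expand N (f : {ffun 'I_m -> 'I_N}) : seq (word k) :=
  \big[cat/[::]]_(i < m) nseq (f i) (Lf i).

Lemma count_big_cat x (F : 'I_m -> seq (word k)) :
  count_mem x (\big[cat/[::]]_(i < m) F i) = \sum_(i < m) count_mem x (F i).
Proof. by elim/big_rec2: _ => // i y s _ <-; rewrite count_cat. Qed.

Lemma count_expand N (f : {ffun 'I_m -> 'I_N}) j : count_mem (Lf j) (expand f) = f j.
Proof.
rewrite count_big_cat (bigD1 j) //= big1 ?addn0 => [|i ij].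
  by rewrite count_nseq /= eqxx mul1n.
by rewrite count_nseq /= (inj_eq Lf_inj) (negbTE ij).
Qed.

Lemma count_expand_out N (f : {ffun 'I_m -> 'I_N}) x : x \notin lynL ->
  count_mem x (expand f) = 0.
Proof.
move=> xn; rewrite count_big_cat big1 // => i _; rewrite count_nseq /=.
by case: eqP => [E|//]; rewrite -E Lf_mem in xn.
Qed.

Lemma mem_expand N (f : {ffun 'I_m -> 'I_N}) x : x \in expand f ->
  exists i, x = Lf i /\ 0 < f i.
Proof.
move=> xin; case: (boolP [exists i, (Lf i == x) && (0 < f i)]).
  by case/existsP => i /andP[Ex fi]; exists i; rewrite (eqP Ex).
rewrite negb_exists => /forallP H; exfalso.
have : count_mem x (expand f) = 0.
  rewrite count_big_cat big1 // => i _; rewrite count_nseq /=.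
  by have := H i; case: eqP => //= _; rewrite -leqNgt leqn0 => /eqP ->.
by move/eqP; rewrite -/(nat_of_bool false) eqn0Ngt -has_count has_pred1 xin.
Qed.

Lemma expand_lyn N (f : {ffun 'I_m -> 'I_N}) : all (@lyndon k) (expand f).
Proof. by apply/allP => x /mem_expand [i [-> _]]; apply: Lf_lyn. Qed.

Definition phi N (ls : seq (word k)) : {ffun 'I_m -> 'I_N.+1} :=
  [ffun i => inord (count_mem (Lf i) ls)].

Lemma phi_expand N (f : {ffun 'I_m -> 'I_N.+1}) : phi N (expand f) = f.
Proof. by apply/ffunP => i; rewrite ffunE count_expand inord_val. Qed.

Lemma phi_perm N ls1 ls2 : perm_eq ls1 ls2 -> phi N ls1 = phi N ls2.
Proof. by move/permP => H; apply/ffunP => i; rewrite !ffunE H. Qed.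

Lemma phiE N ls i : count_mem (Lf i) ls <= N -> (phi N ls i : nat) = count_mem (Lf i) ls.
Proof. by move=> H; rewrite ffunE inordK. Qed.

Lemma perm_phi N ls : all (fun l => l \in lynL) ls ->
  (forall j, count_mem (Lf j) ls <= N) -> perm_eq ls (expand (phi N ls)).
Proof.
move=> A H; apply: perm_countP => x.
case: (boolP (x \in lynL)) => xl.
  by have [i <-] := Lf_onto xl; rewrite count_expand phiE.
rewrite count_expand_out //; apply/count_memPn.
by apply: contra xl => xls; apply: (allP A).
Qed.

Lemma wt_expand N (f : {ffun 'I_m -> 'I_N}) :
  wt (flatten (expand f)) = \big[+%MM/0%MM]_(i < m) (wt (Lf i) *+ f i)%MM.
Proof.
have Hn (l : word k) j : wt (flatten (nseq j l)) = (wt l *+ j)%MM.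
  elim: j => [|j IH]; first by rewrite mulm0n wt_nil.
  by rewrite mulmS /= wt_cat IH.
rewrite /expand; elim: (index_enum _) => [|i r IH]; first by rewrite !big_nil wt_nil.
by rewrite !big_cons flatten_cat wt_cat IH Hn.
Qed.

End Multi.

Section Inst.
Variables k n : nat.
Local Notation m := (m k n).
Local Notation Lf := (@Lf k n).
Local Notation lynL := (lynL k n).

Definition wsum N (f : {ffun 'I_m -> 'I_N}) : 'X_{1..k} :=
  \big[+%MM/0%MM]_(i < m) (wt (Lf i) *+ f i)%MM.

Lemma size_flatten_ge (ls : seq (word k)) : all (@lyndon k) ls -> size ls <= size (flatten ls).
Proof.
elim: ls => //= l ls IH /andP[Ll A]; rewrite size_cat -add1n leq_add //.
by rewrite lt0n size_eq0 lyn_nil.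
exact: IH.
Qed.

Lemma mem_size_flatten (l : word k) ls : l \in ls -> size l <= size (flatten ls).
Proof.
elim: ls => //= l' ls IH; rewrite inE => /orP[/eqP->|/IH H]; rewrite size_cat ?leq_addr //.
exact: leq_trans H (leq_addl _ _).
Qed.

Lemma in_lynL_all ls : all (@lyndon k) ls -> size (flatten ls) <= n ->
  all (fun l => l \in lynL) ls.
Proof.
move=> A sn; apply/allP => l ll; rewrite mem_lynL (allP A _ ll) /=.
exact: leq_trans (mem_size_flatten ll) sn.
Qed.

Lemma count_le_n ls x : all (@lyndon k) ls -> size (flatten ls) <= n ->
  count_mem x ls <= n.
Proof.
by move=> A sn; apply: leq_trans (count_size _ _) (leq_trans (size_flatten_ge A) sn).
Qed.

Lemma countA (beta : 'X_{1..k}) : mdeg beta <= n ->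
  #|[pred f : {ffun 'I_m -> 'I_n.+1} | wsum f == beta]| =
  #|[set t : (mdeg beta).-tuple 'I_k | wt t == beta]|.
Proof.
move=> bn.
have -> : #|[set t : (mdeg beta).-tuple 'I_k | wt t == beta]| =
   #|[set t : (mdeg beta).-tuple 'I_k |
             `[< exists ls, [/\ lyndon_factorization (val t) ls, predT ls &
                               wt (val t) = beta] >]]|.
  apply: eq_card => t; rewrite !inE; apply/eqP/asboolP.
    by move=> E; exists (fact t); split => //; exact: fact_ok.
  by case=> ls [].
rewrite -(@count_bij k _ (fun f => wsum f == beta) (@phi k n n) (@expand k n _) predT beta
   (mdeg beta) (erefl _)); first by apply: eq_card => f; rewrite inE.
- by move=> *; apply: phi_perm.
- by [].
- move=> f /eqP E; split => //; first exact: phi_expand.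
  + exact: expand_lyn.
  + by rewrite wt_expand.
move=> ls A S _ W.
have sn : size (flatten ls) <= n by rewrite -mdeg_wt W.
have P := perm_phi (in_lynL_all A sn) (fun j => count_le_n _ A sn).
split => //; apply/eqP; rewrite /wsum -wt_expand -W; apply: wt_flatten_perm.
by rewrite perm_sym.
Qed.

Definition QO (ls : seq (word k)) := all (fun l => odd (size l)) ls && uniq ls.

Lemma countO (beta : 'X_{1..k}) d : mdeg beta = d -> mdeg beta <= n ->
  #|[pred f : {ffun 'I_m -> 'I_2} |
      [forall i, (f i == 0 :> nat) || odd (size (Lf i))] && (wsum f == beta)]| =
  #|[set t : d.-tuple 'I_k |
             `[< exists ls, [/\ lyndon_factorization (val t) ls, QO ls &
                               wt (val t) = beta] >]]|.
Proof.
move=> hd bn.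
rewrite -(@count_bij k _ (fun f : {ffun 'I_m -> 'I_2} =>
   [forall i, (f i == 0 :> nat) || odd (size (Lf i))] && (wsum f == beta))
   (@phi k n 1) (@expand k n _) QO beta d hd); first by apply: eq_card => f; rewrite inE.
- by move=> *; apply: phi_perm.
- by move=> l1 l2 P; rewrite /QO (perm_all _ P) (perm_uniq P).
- move=> f /andP[/forallP F /eqP E]; split => //; first exact: phi_expand.
  + exact: expand_lyn.
  + apply/andP; split.
      apply/allP => x /mem_expand [i [-> fi]].
      by have := F i; rewrite eqn0Ngt fi. 
    apply: uniq_count1 => x; case: (boolP (x \in lynL)) => xl.
      by have [i <-] := Lf_onto xl; rewrite count_expand -ltnS.
    by rewrite count_expand_out.
  + by rewrite wt_expand.
move=> ls A S /andP[Od U] W.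
have sn : size (flatten ls) <= n by rewrite -mdeg_wt W.
have c1 j : count_mem (Lf j) ls <= 1 by rewrite count_uniq_mem // leq_b1.
have P := perm_phi (in_lynL_all A sn) c1.
split => //; apply/andP; split.
  apply/forallP => i; rewrite phiE //; apply/orP.
  case: (boolP (count_mem (Lf i) ls == 0)) => [E|cp]; [by left|right].
  apply: (allP Od).
  by rewrite -has_pred1 has_count lt0n.
apply/eqP; rewrite /wsum -wt_expand -W; apply: wt_flatten_perm.
by rewrite perm_sym.
Qed.


Definition opt (o : option 'I_k) : seq (word k) := if o is Some a then [:: [:: a]] else [::].

Definition oddl (s : seq (word k)) : option 'I_k :=
  if s is [:: [:: a]] then Some a else None.

Definition oddp (l : word k) := odd (size l).

Definition phiEv (ls : seq (word k)) : option 'I_k * {ffun 'I_m -> 'I_n.+1} :=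
  (oddl (filter oddp ls), @phi k n n (filter (predC oddp) ls)).

Definition RE (x : option 'I_k * {ffun 'I_m -> 'I_n.+1}) := opt x.1 ++ expand x.2.

Definition QE (ls : seq (word k)) :=
  (count oddp ls <= 1) && all (fun l => oddp l ==> (size l == 1)) ls.

Lemma oddl_perm s1 s2 : perm_eq s1 s2 -> oddl s1 = oddl s2.
Proof.
move=> P; have := perm_size P.
case: s1 s2 P => [|x [|y s]] [|x' [|y' s']] //= P _.
  by have := perm_mem P x; rewrite !inE eqxx => /esym/eqP ->.
by clear P; case: x => [|? [|? ?]]; case: x' => [|? [|? ?]].
Qed.

Lemma filter_none (T : Type) (p : pred T) s : all (predC p) s -> filter p s = [::].
Proof. by elim: s => //= x s IH /andP[/negbTE -> /IH]. Qed.

Lemma countE (beta : 'X_{1..k}) d : mdeg beta = d -> mdeg beta <= n ->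
  #|[pred x : option 'I_k * {ffun 'I_m -> 'I_n.+1} |
      [forall i, (x.2 i == 0 :> nat) || ~~ odd (size (Lf i))] &&
      ((wt (flatten (opt x.1)) + wsum x.2)%MM == beta)]| =
  #|[set t : d.-tuple 'I_k |
             `[< exists ls, [/\ lyndon_factorization (val t) ls, QE ls &
                               wt (val t) = beta] >]]|.
Proof.
move=> hd bn.
rewrite -(@count_bij k _ (fun x : option 'I_k * {ffun 'I_m -> 'I_n.+1} =>
      [forall i, (x.2 i == 0 :> nat) || ~~ odd (size (Lf i))] &&
      ((wt (flatten (opt x.1)) + wsum x.2)%MM == beta))
   phiEv RE QE beta d hd); first by apply: eq_card => f; rewrite inE.
- move=> l1 l2 P; rewrite /phiEv (oddl_perm (perm_filter _ P)).
  by rewrite (@phi_perm k n n _ _ (perm_filter _ P)).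
- by move=> l1 l2 P; rewrite /QE (perm_all _ P) (permP P).
- case=> o f /andP[/forallP F /eqP E] /=.
  have Ae : all (predC oddp) (expand f).
    apply/allP => x /mem_expand [i [-> fi]] /=.
    by have := F i; rewrite eqn0Ngt fi.
  have Oo : all oddp (opt o) by destruct o.
  split.
  + rewrite /phiEv /RE /= !filter_cat (filter_none Ae) cats0 (all_filterP Oo).
    rewrite (filter_none (p := predC oddp)); last by destruct o.
    rewrite (all_filterP Ae) phi_expand; by destruct o.
  + by rewrite all_cat expand_lyn andbT; destruct o.
  + rewrite /QE /RE count_cat all_cat -(size_filter oddp (expand f)) (filter_none Ae).
    rewrite addn0; apply/and3P; split; first by destruct o.
      by destruct o.
    by apply: sub_all Ae => x /= /negbTE ->.
  + by rewrite /RE /= flatten_cat wt_cat wt_expand.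
move=> ls A S /andP[C1 Al] W.
have sn : size (flatten ls) <= n by rewrite -mdeg_wt W.
have Aln := in_lynL_all A sn.
set so := filter oddp ls; set se := filter (predC oddp) ls.
have sel : size ls <= n := leq_trans (size_flatten_ge A) sn.
have cse j : count_mem (Lf j) se <= n.
  apply: leq_trans (count_size _ _) _; rewrite size_filter.
  exact: leq_trans (count_size _ _) sel.
have Ase : all (fun l => l \in lynL) se.
  by apply/allP => x; rewrite mem_filter => /andP[_ /(allP Aln)].
have Pse := perm_phi Ase cse.
have Pso : so = opt (oddl so).
  have : size so <= 1 by rewrite size_filter.
  have mso x : x \in so -> size x == 1.
    by rewrite mem_filter => /andP[ox /(allP Al)]; rewrite ox.
  move: mso; case: so => [|l [|? ?]] //= mso _.
  have := mso l (mem_head _ _); case: l {mso} => [|a [|? ?]] //.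
have PR : perm_eq ls (RE (phiEv ls)).
  rewrite /RE /phiEv /= -/so -/se -Pso.
  apply: (@perm_trans _ (so ++ se)); last by rewrite perm_cat2l.
  by rewrite perm_sym; apply: (permEl (perm_filterC oddp ls)).
split => //; apply/andP; split.
  apply/forallP => i; rewrite /phiEv /= phiE //; apply/orP.
  case: (boolP (count_mem (Lf i) se == 0)) => [E|cp]; [by left|right].
  have : Lf i \in se by rewrite -has_pred1 has_count lt0n.
  by rewrite mem_filter => /andP[].
apply/eqP; rewrite -W (wt_flatten_perm PR) /RE flatten_cat wt_cat wt_expand.
by [].
Qed.

End Inst.

From mathcomp Require Import ring.
Import GRing.Theory.

Section Alg.
Variables k n : nat.
Local Open Scope ring_scope.
Local Notation P := {mpoly int[k]}.

Lemma coef_sum (T : finType) (c : T -> int) (g : T -> 'X_{1..k}) mm :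
  (\sum_(x : T) c x *: ('X_[g x] : P))@_mm = \sum_(x | g x == mm) c x.
Proof.
rewrite raddf_sum /= [RHS]big_mkcond /=; apply: eq_bigr => x _.
by rewrite mcoeffZ mcoeffX; case: eqP; rewrite ?mulr1 ?mulr0.
Qed.

Lemma prodX (I : Type) (r : seq I) (F : I -> 'X_{1..k}) :
  \prod_(i <- r) ('X_[F i] : P) = 'X_[\big[+%MM/0%MM]_(i <- r) F i].
Proof.
elim: r => [|i r IH]; first by rewrite !big_nil mpolyX0.
by rewrite !big_cons IH mpolyXD.
Qed.

Lemma prod_expand (I T : finType) (c : I -> T -> int) (g : I -> T -> 'X_{1..k}) :
  \prod_(i : I) \sum_(j : T) c i j *: ('X_[g i j] : P) =
  \sum_(f : {ffun I -> T}) (\prod_(i : I) c i (f i)) *: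
       'X_[\big[+%MM/0%MM]_(i : I) g i (f i)].
Proof.
rewrite bigA_distr_bigA; apply: eq_bigr => f _.
by rewrite scaler_prod prodX.
Qed.

Definition teq (p q : P) := forall mm : 'X_{1..k}, (mdeg mm <= n)%N -> p@_mm = q@_mm.

Lemma teq_refl p : teq p p. Proof. by []. Qed.
Lemma teq_sym p q : teq p q -> teq q p. Proof. by move=> H mm /H ->. Qed.
Lemma teq_trans p q r : teq p q -> teq q r -> teq p r.
Proof. by move=> H1 H2 mm d; rewrite H1 // H2. Qed.

Lemma teqMr p q r : teq p q -> teq (p * r) (q * r).
Proof.
move=> H mm d; rewrite !mcoeffM; apply: eq_bigr => kk E.
rewrite H //; apply: leq_trans d.
apply: leq_trans (leq_addr (mdeg kk.2) _) _.
by rewrite -mdegD -(eqP E).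
Qed.

Lemma teqMl p q r : teq p q -> teq (r * p) (r * q).
Proof. by move=> H; rewrite ![r * _]mulrC; apply: teqMr. Qed.

Lemma teq_prod (I : Type) (r : seq I) (F G : I -> P) :
  (forall i, teq (F i) (G i)) -> teq (\prod_(i <- r) F i) (\prod_(i <- r) G i).
Proof.
move=> H; elim: r => [|i r IH]; first by rewrite !big_nil.
rewrite !big_cons; apply: teq_trans (teqMr _ (H i)) _; exact: teqMl.
Qed.

Lemma teq_prod1 (I : Type) (r : seq I) (F : I -> P) :
  (forall i, teq (F i) 1) -> teq (\prod_(i <- r) F i) 1.
Proof.
move=> H; elim: r => [|i r IH]; first by rewrite big_nil.
rewrite big_cons; apply: teq_trans (teqMr _ (H i)) _; rewrite mul1r; exact: IH.
Qed.

Lemma geo (z : P) N : (1 - z) * \sum_(j < N) z ^+ j = 1 - z ^+ N.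
Proof.
elim: N => [|N IH]; first by rewrite big_ord0 mulr0 expr0 subrr.
rewrite big_ord_recr /= mulrDr IH exprS; ring.
Qed.

Lemma teq_geo (s : int) (v : 'X_{1..k}) : (0 < mdeg v)%N ->
  teq ((1 - s *: 'X_[v]) * \sum_(j < n.+1) (s ^+ j) *: 'X_[(v *+ j)%MM]) 1.
Proof.
move=> v0.
have -> : \sum_(j < n.+1) (s ^+ j) *: ('X_[(v *+ j)%MM] : P) =
          \sum_(j < n.+1) (s *: 'X_[v]) ^+ j.
  by apply: eq_bigr => j _; rewrite exprZn mpolyXn.
rewrite geo => mm d; rewrite mcoeffB exprZn mpolyXn mcoeffZ mcoeffX.
case: eqP => [E|_]; last by rewrite mulr0 subr0.
have := d; rewrite -E mdegMn; case: (mdeg v) v0 => // a _.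
by rewrite mulSn ltnNge leq_addr.
Qed.

End Alg.

Section Main.
Variables k n : nat.
Local Open Scope ring_scope.
Local Notation m := (m k n).
Local Notation Lf := (@Lf k n).
Local Notation P := {mpoly int[k]}.
Local Notation teq := (teq n).

Definition v (i : 'I_m) := wt (Lf i).

Lemma v_pos i : (0 < mdeg (v i))%N.
Proof. by rewrite mdeg_wt lt0n size_eq0 lyn_nil // Lf_lyn. Qed.

Definition sg i : int := (-1) ^+ size (Lf i).
Definition XpF i : P := 1 - sg i *: 'X_[v i].
Definition AnF i : P := \sum_(j < n.+1) (sg i ^+ j) *: 'X_[(v i *+ j)%MM].
Definition OoF i : P :=
  \sum_(j < 2) ((j == 0 :> nat) || odd (size (Lf i)))%:R *: 'X_[(v i *+ j)%MM].
Definition MeF i : P :=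
  \sum_(j < n.+1) ((j == 0 :> nat) || ~~ odd (size (Lf i)))%:R *: 'X_[(v i *+ j)%MM].
Definition XeF i : P := if odd (size (Lf i)) then 1 else 1 - 'X_[v i].
Definition p1 : P := \sum_(a : 'I_k) 1 *: 'X_[wt [:: a]].
Definition P1 : P := \sum_(o : option 'I_k) 1 *: 'X_[wt (flatten (opt o))].
Definition Bn : P := \sum_(j < n.+1) (- p1) ^+ j.

Lemma P1E : P1 = 1 + p1.
Proof.
rewrite /P1 (bigD1 None) //= wt_nil mpolyX0 scale1r; congr (_ + _).
rewrite (reindex_omap Some id) //=; first by apply: eq_bigl => a; rewrite eqxx.
by case.
Qed.

Lemma XpAn : teq (\prod_i XpF i * \prod_i AnF i) 1.
Proof. by rewrite -big_split /=; apply: teq_prod1 => i; apply: teq_geo; apply: v_pos. Qed.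

Lemma OoXe i : OoF i * XeF i = XpF i.
Proof.
rewrite /OoF /XeF /XpF /sg big_ord_recr big_ord1 /= mulm0n mpolyX0 mulm1n.
rewrite -signr_odd; case: (odd (size (Lf i))) => /=; rewrite ?scale1r ?scale0r ?mulr1 ?addr0 ?mul1r.
  by rewrite expr1 scaleN1r opprK.
by [].
Qed.


Lemma XeMe i : teq (XeF i * MeF i) 1.
Proof.
rewrite /XeF /MeF; case: (boolP (odd (size (Lf i)))) => od.
  rewrite mul1r big_ord_recl /= mulm0n mpolyX0 scale1r big1 ?addr0 //.
  by move=> j _; rewrite /= scale0r.
have := @teq_geo k n 1 (v i) (v_pos i); rewrite scale1r.
suff -> : \sum_(j < n.+1) ((j == 0 :> nat) || ~~ false)%:R *: ('X_[(v i *+ j)%MM] : P) =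
          \sum_(j < n.+1) (1 ^+ j) *: 'X_[(v i *+ j)%MM] by [].
by apply: eq_bigr => j _; rewrite orbT expr1n.
Qed.

Lemma p1X N : p1 ^+ N = \sum_(f : {ffun 'I_N -> 'I_k})
    (\prod_(i < N) (1 : int)) *: 'X_[\big[+%MM/0%MM]_(i < N) wt [:: f i]].
Proof.
have -> : p1 ^+ N = \prod_(i < N) p1 by rewrite prodr_const card_ord.
by rewrite /p1 (prod_expand (fun (_ : 'I_N) (_ : 'I_k) => 1 : int) (fun _ a => wt [:: a])).
Qed.

Lemma coef_p1X N mm : (p1 ^+ N)@_mm =
  #|[pred f : {ffun 'I_N -> 'I_k} | \big[+%MM/0%MM]_(i < N) wt [:: f i] == mm]|%:R.
Proof.
rewrite p1X coef_sum -sum1_card natr_sum; apply: eq_big => [f|f _].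
  by rewrite inE.
by rewrite big1.
Qed.


Lemma mdeg_letters N (f : {ffun 'I_N -> 'I_k}) :
  mdeg (\big[+%MM/0%MM]_(i < N) wt [:: f i]) = N.
Proof.
rewrite (big_morph mdeg mdegD mdeg0).
under eq_bigr do rewrite mdeg_wt.
by rewrite sum1_card card_ord.
Qed.

Lemma p1N0 : teq (p1 ^+ n.+1) 0.
Proof.
move=> mm d; rewrite coef_p1X mcoeff0.
rewrite eq_card0 // => f; rewrite inE; apply/negbTE/eqP => E.
by move: d; rewrite -E mdeg_letters ltnn.
Qed.

Lemma P1Bn : teq (P1 * Bn) 1.
Proof.
rewrite P1E /Bn.
have -> : 1 + p1 = 1 - (- p1) by rewrite opprK.
rewrite geo exprNn => mm d; rewrite mcoeffB.
have := teqMl ((-1) ^+ n.+1) p1N0 d; rewrite mulr0 mcoeff0 => ->.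
by rewrite subr0.
Qed.


Lemma wt_tuple N (t : N.-tuple 'I_k) :
  wt t = \big[+%MM/0%MM]_(i < N) wt [:: tnth t i].
Proof.
have -> : (t : word k) = flatten [seq [:: a] | a <- t].
  by elim: (tval t) => //= a s {1}->.
by rewrite wt_flatten big_map big_tuple.
Qed.

Lemma card_tuple_ffun N beta :
  #|[set t : N.-tuple 'I_k | wt t == beta]| =
  #|[pred g : {ffun 'I_N -> 'I_k} | \big[+%MM/0%MM]_(i < N) wt [:: g i] == beta]|.
Proof.
pose h (t : N.-tuple 'I_k) : {ffun 'I_N -> 'I_k} := [ffun i => tnth t i].
have hinj : injective h.
  move=> t1 t2 E; apply: eq_from_tnth => i.
  by have := congr1 (fun g : {ffun 'I_N -> 'I_k} => g i) E; rewrite /h !ffunE.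
rewrite -(card_imset _ hinj); apply: eq_card => g; rewrite !inE.
apply/imsetP/idP.
  case=> t; rewrite inE wt_tuple => /eqP <- ->.
  by apply/eqP; apply: eq_bigr => i _; rewrite ffunE.
move=> H; exists [tuple g i | i < N].
  rewrite inE wt_tuple; rewrite (eq_bigr (fun i => wt [:: g i])) //.
  by move=> i _; rewrite tnth_mktuple.
by apply/ffunP => i; rewrite ffunE tnth_mktuple.
Qed.

Lemma An_Bn : teq (\prod_i AnF i) Bn.
Proof.
move=> mm d.
rewrite /AnF (prod_expand (fun i (j : 'I_n.+1) => sg i ^+ j) (fun i (j : 'I_n.+1) => (v i *+ j)%MM)).
rewrite coef_sum.
rewrite (eq_bigr (fun _ => (-1) ^+ mdeg mm)); last first.
  move=> f /eqP E; rewrite /sg.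
  under eq_bigr do rewrite -exprM.
  rewrite prodrXr -E (big_morph mdeg mdegD mdeg0).
  by congr (_ ^+ _); apply: eq_bigr => i _; rewrite mdegMn mdeg_wt.
rewrite sumr_const /Bn raddf_sum /=.
have dlt : (mdeg mm < n.+1)%N by [].
rewrite (bigD1 (Ordinal dlt)) //= big1 ?addr0; last first.
  move=> j jd; rewrite -scaleN1r exprZn mcoeffZ coef_p1X.
  rewrite eq_card0 ?mulr0 // => f; rewrite inE; apply/negbTE/eqP => E.
  have : (j : nat) != mdeg mm by apply: contra jd => /eqP ej; apply/eqP/val_inj.
  by rewrite -E mdeg_letters eqxx.
rewrite -scaleN1r exprZn mcoeffZ coef_p1X -card_tuple_ffun -(@countA k n) //.
by rewrite mulr_natr; congr (_ *+ _); apply: eq_card => f; rewrite inE.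
Qed.


Lemma chain : teq (\prod_i OoF i) (P1 * \prod_i MeF i).
Proof.
set Oo := \prod_i OoF i; set Me := \prod_i MeF i.
set Xe := \prod_i XeF i; set Xp := \prod_i XpF i; set An := \prod_i AnF i.
have h1 : teq (Xe * Me) 1 by rewrite -big_split; apply: teq_prod1 => i; exact: XeMe.
have h2 : Oo * Xe = Xp by rewrite -big_split; apply: eq_bigr => i _; exact: OoXe.
have h3 : teq (P1 * An) 1 := teq_trans (teqMl P1 An_Bn) P1Bn.
have s1 : teq Oo (Xp * Me).
  have := teqMl Oo h1; rewrite mulr1 mulrA h2; exact: teq_sym.
apply: teq_trans s1 _.
have s2 := teqMl (Xp * Me) (teq_sym h3); rewrite mulr1 in s2.
apply: teq_trans s2 _.
have -> : Xp * Me * (P1 * An) = (Xp * An) * (P1 * Me) by ring.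
have := teqMr (P1 * Me) XpAn; rewrite mul1r; exact.
Qed.

Lemma prod_bool (I : finType) (b : I -> bool) :
  \prod_(i : I) ((b i)%:R : int) = ([forall i, b i])%:R.
Proof.
case: (boolP [forall i, b i]) => [/forallP H|].
  by rewrite big1 // => i _; rewrite H.
rewrite negb_forall => /existsP [i bi].
by rewrite (bigD1 i) //= (negbTE bi) mul0r.
Qed.

Lemma sum_bool (T : finType) (A B : pred T) :
  \sum_(x | A x) ((B x)%:R : int) = (#|[pred x | B x && A x]|)%:R.
Proof.
rewrite -sum1_card natr_sum [RHS]big_mkcond [LHS]big_mkcond /=.
by apply: eq_bigr => x _; rewrite inE; case: (A x); case: (B x).
Qed.

Lemma coefO beta : (\prod_i OoF i)@_beta =
  (#|[pred f : {ffun 'I_m -> 'I_2} |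
      [forall i, (f i == 0 :> nat) || odd (size (Lf i))] && (wsum f == beta)]|)%:R.
Proof.
rewrite /OoF (prod_expand (fun i (j : 'I_2) => ((j == 0 :> nat) || odd (size (Lf i)))%:R)
   (fun i (j : 'I_2) => (v i *+ j)%MM)) coef_sum.
under eq_bigr do rewrite prod_bool.
rewrite sum_bool; congr (_ %:R); apply: eq_card => f; by rewrite !inE.
Qed.

Lemma coefE beta : (P1 * \prod_i MeF i)@_beta =
  (#|[pred x : option 'I_k * {ffun 'I_m -> 'I_n.+1} |
      [forall i, (x.2 i == 0 :> nat) || ~~ odd (size (Lf i))] &&
      ((wt (flatten (opt x.1)) + wsum x.2)%MM == beta)]|)%:R.
Proof.
rewrite /MeF (prod_expand (fun i (j : 'I_n.+1) => ((j == 0 :> nat) || ~~ odd (size (Lf i)))%:R)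
   (fun i (j : 'I_n.+1) => (v i *+ j)%MM)).
rewrite /P1 big_distrl /=.
under eq_bigr do rewrite big_distrr /=.
rewrite pair_bigA /=.
under eq_bigr do rewrite scale1r -scalerAr -mpolyXD.
rewrite coef_sum.
under eq_bigr do rewrite prod_bool.
rewrite sum_bool; congr (_ %:R); apply: eq_card => f; by rewrite !inE.
Qed.

End Main.

Theorem proposition3p2 (n : nat) (alpha : seq nat) :
  (1 <= n)%N ->
  all (fun a => 0 < a)%N alpha ->
  sumn alpha = n ->
  #|[set w : n.-tuple 'I_(size alpha) |
       `[< in_Wo (val w) /\ has_weight alpha (val w) >]]| =
  #|[set w : n.-tuple 'I_(size alpha) |
       `[< in_We (val w) /\ has_weight alpha (val w) >]]|.
Proof.
move=> _ _ Hs.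
pose k := size alpha.
pose beta : 'X_{1..k} := [multinom nth 0 alpha i | i < k].
have db : mdeg beta = n.
  rewrite mdegE -Hs sumnE (big_nth 0) big_mkord.
  by apply: eq_bigr => i _; rewrite mnmE.
have hw (t : word k) : has_weight alpha t <-> wt t = beta.
  split => [H|H]; first by apply/mnmP => i; rewrite wtE mnmE H.
  by move=> i; rewrite -wtE H mnmE.
have bn : (mdeg beta <= n)%N by rewrite db.
have E := @chain k n beta bn.
rewrite coefO coefE natz in E; move: E; rewrite natz => -[E].
rewrite (@countO k n beta n db bn) (@countE k n beta n db bn) in E.
have -> : #|[set w : n.-tuple 'I_(size alpha) |
       `[< in_Wo (val w) /\ has_weight alpha (val w) >]]| =
   #|[set t : n.-tuple 'I_k |
       `[< exists ls, [/\ lyndon_factorization (val t) ls, QO ls & wt (val t) = beta] >]]|.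
  apply: eq_card => t; rewrite !inE; apply/asboolP/asboolP.
    case=> [[ls [F [O U]]] /hw W]; exists ls; split => //; exact/andP.
  by case=> ls [F /andP[O U] W]; split; [exists ls | exact/hw].
rewrite E; apply: eq_card => t; rewrite !inE; apply/asboolP/asboolP.
  by case=> ls [F /andP[O U] W]; split; [exists ls | exact/hw].
case=> [[ls [F [O U]]] /hw W]; exists ls; split => //; exact/andP.
Qed.
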